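(* Let $\sqrt5$ denote the square root of $5$ in $\mathbb{Z}_{11}$ with $\sqrt5\equiv7\pmod{11}$. Let $\alpha\ge1$ and $j\in\{1,\dots,10\}$, and let $z\in\mathbb{Z}_{11}$ satisfy $z\equiv\frac{2}{\sqrt5}+j\cdot11^{2\alpha-1}\pmod{11^{2\alpha}}$. Then $f_z(y)=y^2-\sqrt5\,zy+1$ has no root in $\mathbb{Z}_{11}$. *)

(* Defs.v *)
(* 11-adic integers Z_p modelled as the inverse limit
   lim Z/p^n Z: a p-adic integer is a sequence of integers (x_n) with
   x_{n+1} = x_n (mod p^n); two sequences represent the same p-adic
   integer iff x_n = y_n (mod p^n) for all n. *)
From mathcomp Require Import all_boot all_order all_algebra ring.
Set Implicit Arguments. Unset Strict Implicit. Unset Printing Implicit Defensive.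
Import Order.TTheory GRing.Theory Num.Theory.
Local Open Scope ring_scope.

Definition coherent (p : nat) (x : nat -> int) : Prop :=
  forall n : nat, (x n.+1 = x n %[mod (p ^ n)%:Z])%Z.

Record Zpadic (p : nat) := MkZp { zseq : nat -> int; zcoh : coherent p zseq }.

Lemma coh_dvd (p : nat) (x : nat -> int) :
  coherent p x -> forall n, ((p ^ n)%:Z %| x n.+1 - x n)%Z.
Proof. by move=> h n; rewrite -eqz_mod_dvd; apply/eqP; apply: h. Qed.

Lemma dvd_coh (p : nat) (x : nat -> int) :
  (forall n, ((p ^ n)%:Z %| x n.+1 - x n)%Z) -> coherent p x.
Proof. by move=> h n; apply/eqP; rewrite eqz_mod_dvd. Qed.

Lemma padd_coh p (x y : Zpadic p) : coherent p (fun n => zseq x n + zseq y n).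
Proof.
apply: dvd_coh => n.
have ->: zseq x n.+1 + zseq y n.+1 - (zseq x n + zseq y n)
        = (zseq x n.+1 - zseq x n) + (zseq y n.+1 - zseq y n) by ring.
by apply: rpredD; exact: (coh_dvd (zcoh _) n).
Qed.

Lemma popp_coh p (x : Zpadic p) : coherent p (fun n => - zseq x n).
Proof.
apply: dvd_coh => n.
have ->: - zseq x n.+1 - - zseq x n = - (zseq x n.+1 - zseq x n) by ring.
by rewrite rpredN; exact: (coh_dvd (zcoh _) n).
Qed.

Lemma pmul_coh p (x y : Zpadic p) : coherent p (fun n => zseq x n * zseq y n).
Proof.
apply: dvd_coh => n.
have ->: zseq x n.+1 * zseq y n.+1 - zseq x n * zseq y n
        = (zseq x n.+1 - zseq x n) * zseq y n.+1
          + zseq x n * (zseq y n.+1 - zseq y n) by ring.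
by apply: rpredD; [apply: dvdz_mulr | apply: dvdz_mull]; exact: (coh_dvd (zcoh _) n).
Qed.

Lemma pconst_coh p (a : int) : coherent p (fun _ => a).
Proof. by []. Qed.

Definition padd p (x y : Zpadic p) : Zpadic p := MkZp (padd_coh x y).
Definition popp p (x : Zpadic p) : Zpadic p := MkZp (popp_coh x).
Definition psub p (x y : Zpadic p) : Zpadic p := padd x (popp y).
Definition pmul p (x y : Zpadic p) : Zpadic p := MkZp (pmul_coh x y).
Definition pconst p (a : int) : Zpadic p := MkZp (pconst_coh p a).

Definition peq p (x y : Zpadic p) : Prop :=
  forall n : nat, (zseq x n = zseq y n %[mod (p ^ n)%:Z])%Z.

(* congruence x = y (mod p^k) in Z_p, i.e. x - y in p^k Z_p *)
Definition pcong p (x y : Zpadic p) (k : nat) : Prop :=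
  (zseq x k = zseq y k %[mod (p ^ k)%:Z])%Z.

(* Main.v *)
Require Import Defs.
From mathcomp Require Import all_boot all_order all_algebra ring zify.
Import GRing.Theory Num.Theory.
Local Open Scope ring_scope.

Lemma val_lem (a : nat) (W : int) : (1 <= a)%N ->
  ((11 ^ (2 * a - 1))%N%:Z %| W * W)%Z -> ((11 ^ (2 * a))%N%:Z %| W * W)%Z.
Proof.
move=> ha; rewrite /dvdz -!topredE /= abszM.
have [->|w0] := posnP `|W|%N; first by rewrite muln0 !dvdn0.
have p11 : prime 11 by [].
have ww : (0 < `|W| * `|W|)%N by rewrite muln_gt0 w0.
rewrite !pfactor_dvdn //.
have ->: (`|W| * `|W|)%N = (`|W| ^ 2)%N by rewrite expnS expn1.
by rewrite lognX; lia.
Qed.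

Lemma coh1 (x : nat -> int) : coherent 11 x ->
  forall k, (1 <= k)%N -> (11 %| x k - x 1%N)%Z.
Proof.
move=> h; elim=> [//|k IH] _.
have [->|k0] := posnP k; first by rewrite subrr dvdz0.
have ->: x k.+1 - x 1 = (x k.+1 - x k) + (x k - x 1%N) by ring.
apply: rpredD; last exact: IH.
apply: dvdz_trans (coh_dvd h k).
by rewrite /dvdz /=; apply: dvdn_exp.
Qed.

Lemma core (a j : nat) (S T Z Y : int) : (1 <= a)%N -> (1 <= j <= 10)%N ->
  (11 %| S - 7)%Z ->
  ((11 ^ (2 * a))%N%:Z %| S * T - 1)%Z ->
  ((11 ^ (2 * a))%N%:Z %| Z - (2 * T + (j * 11 ^ (2 * a - 1))%N%:Z))%Z ->
  ((11 ^ (2 * a))%N%:Z %| Y * Y + - (S * Z * Y) + 1 - 0)%Z -> False.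
Proof.
move=> ha hj hS hB hA hC.
set q : int := (11 ^ (2 * a - 1))%N%:Z.
have hP : (11 ^ (2 * a))%N%:Z = q * 11.
  by rewrite /q -PoszM -expnSr; congr (Posz (11 ^ _)); lia.
rewrite hP in hA hB hC.
rewrite PoszM -/q in hA.
set A := Z - _ in hA. set B := S * T - 1 in hB.
set C := _ - 0 in hC.
set W := 2 * Y - S * Z.
have hq : (q * 11 %| q * q)%Z.
  apply: dvdz_mul => //; rewrite /q /dvdz -!topredE /=.
  by rewrite dvdn_exp //; lia.
have key : (q * 11 %| W * W - 4 * S * j%:Z * q)%Z.
  have ->: W * W - 4 * S * j%:Z * q =
     4 * C + (S * A + 2 * B) * (4 + S * A + 2 * B + 2 * S * j%:Z * q)
     + S * S * j%:Z * j%:Z * (q * q).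
    by rewrite /W /C /A /B; ring.
  apply: rpredD; first apply: rpredD.
  - exact: dvdz_mull.
  - apply: dvdz_mulr; apply: rpredD; [exact: dvdz_mull | exact: dvdz_mull].
  - exact: dvdz_mull.
have hqW : (q %| W * W)%Z.
  have ->: W * W = (W * W - 4 * S * j%:Z * q) + 4 * S * j%:Z * q by ring.
  apply: rpredD; last exact: dvdz_mull.
  by apply: dvdz_trans key; apply: dvdz_mulr.
have := @val_lem a W ha hqW; rewrite hP => hW.
have h4 : (q * 11 %| q * (4 * S * j%:Z))%Z.
  have ->: q * (4 * S * j%:Z) = W * W - (W * W - 4 * S * j%:Z * q) by ring.
  by apply: rpredB.
rewrite dvdz_mul2l in h4; last by rewrite /q eqz_nat expn_eq0.
have h28 : (11 %| (28 * j)%N%:Z)%Z.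
  have ->: (28 * j)%N%:Z = 4 * S * j%:Z - 4 * j%:Z * (S - 7) by rewrite PoszM; ring.
  apply: rpredB => //; exact: dvdz_mull.
move: h28; rewrite /dvdz -!topredE /= Euclid_dvdM //= => hj'.
move/andP: hj => [j1 j10].
by have := dvdn_leq j1 hj'; lia.
Qed.

Theorem lemma5p6 (s t z : Zpadic 11) (alpha j : nat) :
  peq (pmul s s) (pconst 11 5) ->
  pcong s (pconst 11 7) 1 ->
  peq (pmul s t) (pconst 11 1) ->
  (1 <= alpha)%N -> (1 <= j <= 10)%N ->
  pcong z (padd (pmul (pconst 11 2) t)
                (pconst 11 (j * 11 ^ (2 * alpha - 1))%N%:Z)) (2 * alpha) ->
  ~ exists y : Zpadic 11,
      peq (padd (psub (pmul y y) (pmul (pmul s z) y)) (pconst 11 1))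
          (pconst 11 0).
Proof.
move=> _ h7 hst ha hj hz [y hy].
have md : forall (a b d : int), (a = b %[mod d])%Z -> (d %| a - b)%Z.
  by move=> a b d h; rewrite -eqz_mod_dvd; apply/eqP.
apply: (@core alpha j (zseq s (2 * alpha)) (zseq t (2 * alpha))
   (zseq z (2 * alpha)) (zseq y (2 * alpha)) ha hj).
- have h1 := @coh1 _ (zcoh s) (2 * alpha) ltac:(lia).
  have h2 := md _ _ _ h7; rewrite /= expn1 in h2.
  have ->: zseq s (2 * alpha) - 7 = (zseq s (2 * alpha) - zseq s 1) + (zseq s 1 - 7) by ring.
  exact: rpredD.
- exact: md (hst _).
- exact: md hz.
- exact: md (hy _).
Qed.
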